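(* Let $d$ be a positive integer and let $A\in\mathbb{R}^{[3]\times[n]}$ be a matrix that does not have an elimination ordering. Then there exists $b\in\mathbb{R}^{[3]}$ such that the solution graph $G(R(A,b))$ is not connected.
   Context: Fix a positive integer $d$ and let $D=\{0,1,\dots,d\}$; $[n]=\{1,\dots,n\}$. For $A\in\mathbb{R}^{[m]\times[n]}$ and $b\in\mathbb{R}^{[m]}$, $R(A,b)=\{x\in D^{[n]} : Ax\ge b\}$. For $R\subseteq D^{[n]}$, the solution graph $G(R)$ is the undirected graph with vertex set $R$ in which $x,y$ are adjacent iff they differ in exactly one coordinate. A matrix $A=(a_{ij})$ with column index set $J$ can be eliminated at column $j\in J$ if (i) for every row $i$ with $a_{ij}>0$ we have $a_{ij'}=0$ for all $j'\in J\setminus\{j\}$, or (ii) for every row $i$ with $a_{ij}<0$ we have $a_{ij'}=0$ for all $j'\in J\setminus\{j\}$. For $J'\subseteq[n]$, $\mathrm{elm}(A,J')$ is the submatrix of $A$ obtained by deleting the columns indexed by $J'$. A sequence $(j_1,\dots,j_n)$ of the elements of $[n]$ is an elimination ordering (EO) of $A$ if for every $t\in[n]$ the matrix $\mathrm{elm}(A,\{j_1,\dots,j_{t-1}\})$ can be eliminated at column $j_t$. *)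

(* Defs.v *)
From mathcomp Require Import all_boot all_order all_algebra.
From mathcomp Require Import reals.
Set Implicit Arguments. Unset Strict Implicit. Unset Printing Implicit Defensive.
Import Order.TTheory GRing.Theory Num.Theory.
Local Open Scope ring_scope.

(* Points of D^[n] with D = {0,...,d}: finite functions 'I_n -> 'I_d.+1. *)
Definition point (d n : nat) := {ffun 'I_n -> 'I_d.+1}.

Definition solset (R : realType) (d m n : nat) (A : 'M[R]_(m, n)) (b : 'cV[R]_m)
  : {set point d n} :=
  [set x : point d n | [forall i : 'I_m,
      b i 0 <= \sum_(j < n) A i j * ((x j : nat)%:R)]].

Definition adjacent (d n : nat) (x y : point d n) : bool :=
  #|[set j : 'I_n | x j != y j]| == 1%N.

Definition sol_rel (d n : nat) (S : {set point d n}) : rel (point d n) :=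
  fun x y => [&& x \in S, y \in S & adjacent x y].

Definition graph_connected (d n : nat) (S : {set point d n}) : Prop :=
  forall x y, x \in S -> y \in S -> connect (sol_rel S) x y.

(* A restricted to the columns J (i.e. elm(A, [n] \ J)) can be eliminated at
   column j \in J. *)
Definition can_elim (R : realType) (m n : nat) (A : 'M[R]_(m, n))
  (J : {set 'I_n}) (j : 'I_n) : Prop :=
  j \in J /\
  ((forall i : 'I_m, 0 < A i j -> forall j' : 'I_n, j' \in J -> j' != j -> A i j' = 0)
   \/
   (forall i : 'I_m, A i j < 0 -> forall j' : 'I_n, j' \in J -> j' != j -> A i j' = 0)).

Definition elim_ordering (R : realType) (m n : nat) (A : 'M[R]_(m, n))
  (s : seq 'I_n) : Prop :=
  perm_eq s (enum 'I_n) /\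
  forall (s1 s2 : seq 'I_n) (j : 'I_n), s = s1 ++ j :: s2 ->
    can_elim A (~: [set x in s1]) j.

Definition has_EO (R : realType) (m n : nat) (A : 'M[R]_(m, n)) : Prop :=
  exists s : seq 'I_n, elim_ordering A s.

(* Main.v *)
Require Import Defs.
From mathcomp Require Import all_boot all_order all_algebra.
From mathcomp Require Import reals.
From mathcomp Require Import ring lra zify.
From Stdlib Require Import Classical_Prop.
Set Implicit Arguments. Unset Strict Implicit. Unset Printing Implicit Defensive.
Import Order.TTheory GRing.Theory Num.Theory.
Local Open Scope ring_scope.

Section S.
Variable R : realType.
Variables d n : nat.
Implicit Types (A : 'M[R]_(3, n)) (z x y : point d n).

Definition sA A z (i : 'I_3) : R := \sum_(j < n) A i j * ((z j : nat)%:R).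
Definition nzcol A (j : 'I_n) := [exists i, A i j != 0].

Lemma sA_diff A z z' (j0 : 'I_n) i :
  (forall j, j != j0 -> z j = z' j) ->
  sA A z' i = sA A z i + A i j0 * (((z' j0 : nat)%:R) - ((z j0 : nat)%:R)).
Proof.
move=> h; rewrite /sA (bigD1 j0) //= [in RHS](bigD1 j0) //=.
rewrite (eq_bigr (fun j => A i j * ((z j : nat)%:R))); last first.
  by move=> j /h ->.
by rewrite mulrBr; lra.
Qed.

Lemma sA_eq A z x i :
  (forall j, nzcol A j -> z j = x j) -> sA A z i = sA A x i.
Proof.
move=> h; apply: eq_bigr => j _.
case: (boolP (nzcol A j)) => [/h -> //|].
move/existsPn => /(_ i); rewrite negbK => /eqP ->; by rewrite !mul0r.
Qed.

Lemma in_solset A b z : (z \in solset d A b) = [forall i, b i 0 <= sA A z i].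
Proof. by rewrite inE. Qed.

Lemma witness_bad A x y :
  (exists j, nzcol A j /\ x j != y j) ->
  (forall j, nzcol A j ->
     ((x j : nat) = 0%N /\ exists i, A i j < 0 /\ A i j < sA A y i - sA A x i) \/
     ((x j : nat) = d /\ exists i, 0 < A i j /\ 0 < A i j + (sA A y i - sA A x i))) ->
  exists b, ~ graph_connected (solset d A b).
Proof.
move=> [j1 [nzj1 xy1]] hk.
pose b : 'cV[R]_3 := \col_i Num.min (sA A x i) (sA A y i).
exists b => hc.
have xS : x \in solset d A b.
  by rewrite in_solset; apply/forallP => i; rewrite mxE ge_min lexx.
have yS : y \in solset d A b.
  by rewrite in_solset; apply/forallP => i; rewrite mxE ge_min lexx orbT.
have := hc x y xS yS.
move/connectP => [p pth ylast].
suff: forall j, nzcol A j -> last x p j = x j.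
  by move/(_ j1 nzj1) => h; move: xy1; rewrite ylast h eqxx.
have step : forall a a' : point d n, (forall j, nzcol A j -> a j = x j) ->
   sol_rel (solset d A b) a a' -> forall j, nzcol A j -> a' j = x j.
  move=> a a' ha /and3P [aS a'S adj].
  move: adj; rewrite /adjacent => /cards1P [j0 hj0].
  have hne : forall j, j != j0 -> a j = a' j.
    move=> j jn; apply/eqP; apply: contraNT jn => h.
    have : j \in [set j | a j != a' j] by rewrite inE.
    by rewrite hj0 inE.
  move=> j nzj.
  case: (eqVneq j j0) => [ej|nej]; last by rewrite -hne // ha.
  subst j.
  exfalso.
  have hsA : forall i, sA A a i = sA A x i by move=> i; apply: sA_eq.
  have hd := hne.
  move: a'S; rewrite in_solset => /forallP hS.
  have ha0 := ha j0 nzj.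
  have ne0 : a j0 != a' j0.
    have : j0 \in [set j | a j != a' j] by rewrite hj0 inE.
    by rewrite inE.
  case: (hk j0 nzj) => [[x0 [i [hneg hlt]]] | [xd [i [hpos hlt]]]].
  - have := hS i; rewrite mxE (@sA_diff A a a' j0 i hne) hsA ha0 x0.
    have t1 : (1 <= ((a' j0 : nat)%:R : R)).
      rewrite ler1n lt0n; apply: contra ne0 => /eqP h0.
      by apply/eqP; apply: val_inj; rewrite /= ha0 x0 h0.
    rewrite ge_min; move: t1; set t := ((a' j0 : nat)%:R : R) => t1.
    case/orP => h; clear -hneg hlt t1 h; nra.
  - have := hS i; rewrite mxE (@sA_diff A a a' j0 i hne) hsA ha0 xd.
    have t1 : (((a' j0 : nat)%:R : R) + 1 <= d%:R).
      have : (a' j0 < d)%N.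
        have := ltn_ord (a' j0); rewrite ltnS leq_eqVlt => /orP [/eqP h0|//].
        by exfalso; move: ne0; rewrite -(inj_eq val_inj) /= ha0 xd h0 eqxx.
      by move=> h; rewrite natr1 ler_nat.
    rewrite ge_min; move: t1; set t := ((a' j0 : nat)%:R : R) => t1.
    case/orP => h; clear -hpos hlt t1 h; nra.
have : forall a : point d n, (forall j, nzcol A j -> a j = x j) ->
    path (sol_rel (solset d A b)) a p -> forall j, nzcol A j -> last a p j = x j.
  elim: p {pth ylast} => [//|a' p IH] a ha /= /andP [e pth].
  by apply: IH pth; apply: step e.
move=> h; exact: (h x (fun _ _ => erefl) pth).
Qed.

Lemma e01 : (0 == 1 :> R) = false. Proof. by rewrite eq_sym oner_eq0. Qed.
Lemma e0m1 : (0 == -1 :> R) = false. Proof. by rewrite eq_sym oppr_eq0 oner_eq0. Qed.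
Lemma em11 : (-1 == 1 :> R) = false.
Proof. apply: lt_eqF; rewrite -subr_gt0 opprK; exact: (@ltr0Sn R 1). Qed.

Definition vw A (w : 'I_n -> R) (i : 'I_3) := \sum_(c < n) A i c * w c.

Lemma G0 A (w : 'I_n -> R) : (0 < d)%N ->
  (forall c, w c = 0 \/ w c = 1 \/ w c = -1) ->
  (exists j, w j != 0) ->
  (forall c, w c != 0 -> exists i, w c * A i c < 0 /\ 0 < vw A w i - w c * A i c) ->
  (forall c, nzcol A c -> w c = 0 -> exists i, A i c != 0 /\ 0 <= vw A w i) ->
  exists b, ~ graph_connected (solset d A b).
Proof.
move=> hd hw [j0 hj0] hsup hcol.
pose v := vw A w.
pose x : point d n := [ffun c => if w c == 1 then ord0 else if w c == -1 then ord_max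
   else if [exists i, (A i c < 0) && (A i c < v i)] then ord0 else ord_max].
pose y : point d n := [ffun c => if w c == 1 then inord 1 else if w c == -1 then inord d.-1
   else x c].
have hyx : forall c, ((y c : nat)%:R : R) - ((x c : nat)%:R) = w c.
  move=> c; rewrite !ffunE.
  case: (hw c) => [->|[->|->]].
  - by rewrite e01 e0m1 subrr.
  - by rewrite eqxx /= inordK ?subr0 // ltnS.
  - rewrite em11 eqxx /= inordK; last by rewrite ltnS leq_pred.
    rewrite -subn1 natrB //; rewrite addrAC subrr add0r //.
have hv : forall i, sA A y i - sA A x i = v i.
  move=> i; rewrite /sA -sumrB; apply: eq_bigr => c _; by rewrite -mulrBr hyx.
have wnz : forall c, w c != 0 -> nzcol A c.
  move=> c /hsup [i [h _]]; apply/existsP; exists i; apply: contraTneq h => ->.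
  by rewrite mulr0 ltxx.
apply: (@witness_bad A x y).
  exists j0; split; first exact: wnz.
  apply/eqP => h; have := hyx j0; rewrite h subrr => /esym/eqP; by rewrite (negbTE hj0).
move=> c nzc.
case: (hw c) => [wc|[wc|wc]].
- have := hcol c nzc wc => -[i [ai vi]].
  case: (boolP [exists i, (A i c < 0) && (A i c < v i)]) => he.
  + left; rewrite ffunE wc e01 e0m1 he; split => //.
    move/existsP: he => [i' /andP [h1 h2]]; by exists i'; rewrite hv.
  + right; rewrite ffunE wc e01 e0m1 (negbTE he); split => //; exists i; rewrite hv.
    case: (ltrgtP (A i c) 0) => hA.
    * exfalso; move/negP: he; apply; apply/existsP; exists i; rewrite hA /=.
      exact: (lt_le_trans hA vi).
    * split => //; rewrite /v; clear -hA vi; lra.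
    * by move: ai; rewrite hA eqxx.
- left; rewrite ffunE wc eqxx; split => //.
  have := hsup c; rewrite wc oner_neq0 => /(_ isT) [i [h1 h2]]; exists i; rewrite hv.
  move: h1 h2; rewrite !mul1r => h1 h2; split => //; by rewrite -subr_gt0.
- right; rewrite ffunE wc em11 eqxx; split => //.
  have := hsup c; rewrite wc oppr_eq0 oner_neq0 => /(_ isT) [i [h1 h2]]; exists i; rewrite hv.
  move: h1 h2; rewrite !mulN1r oppr_lt0 opprK => h1 h2; split => //; by rewrite addrC.
Qed.

Lemma meet2 (T N : {set 'I_3}) : (2 <= #|T|)%N -> (2 <= #|N|)%N -> exists i, i \in T /\ i \in N.
Proof.
move=> hT hN.
have h1 := cardsUI T N.
have h2 : (#|T :|: N| <= 3)%N by have := max_card (mem (T :|: N)); rewrite card_ord.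
have : (0 < #|T :&: N|)%N by lia.
by move/card_gt0P => [i]; rewrite inE => /andP [? ?]; exists i.
Qed.

Lemma two_nz (i1 i2 : 'I_3) (N : {set 'I_3}) : i1 != i2 -> i1 \in N -> i2 \in N -> (2 <= #|N|)%N.
Proof.
move=> ne h1 h2.
have : [set i1; i2] \subset N by apply/subsetP => i; rewrite !inE => /orP [] /eqP ->.
by move/subset_leq_card; rewrite cards2 ne.
Qed.

Lemma vwN A (w : 'I_n -> R) i : vw A (fun c => - w c) i = - vw A w i.
Proof. by rewrite /vw -sumrN; apply: eq_bigr => c _; rewrite mulrN. Qed.

Lemma G A (w : 'I_n -> R) : (0 < d)%N ->
  (forall c, w c = 0 \/ w c = 1 \/ w c = -1) ->
  (exists j, w j != 0) ->
  (forall c, w c != 0 ->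
     (exists i, w c * A i c < 0 /\ 0 < vw A w i - w c * A i c) /\
     (exists i, 0 < w c * A i c /\ vw A w i - w c * A i c < 0)) ->
  (forall c, nzcol A c -> exists i1 i2, i1 != i2 /\ A i1 c != 0 /\ A i2 c != 0) ->
  exists b, ~ graph_connected (solset d A b).
Proof.
move=> hd hw hnz hsup hcol.
case: (leqP 2 #|[set i | 0 <= vw A w i]|) => hT.
  apply: (G0 hd hw hnz); first by move=> c /hsup [].
  move=> c /hcol [i1 [i2 [ne [a1 a2]]]] _.
  have hN : (2 <= #|[set i | (A i c != 0)%R]|)%N by apply: (two_nz ne); rewrite inE.
  have [i [] ] := meet2 hT hN; rewrite !inE => h1 h2; by exists i.
have hT' : (2 <= #|[set i | (vw A w i <= 0)%R]|)%N.
  have h1 := cardsUI [set i | 0 <= vw A w i] [set i | vw A w i <= 0].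
  have : [set i | 0 <= vw A w i] :|: [set i | vw A w i <= 0] = setT.
    apply/setP => i; rewrite !inE; case: (lerP 0 (vw A w i)) => // h; exact: ltW.
  move=> e; rewrite e cardsT card_ord in h1.
  have h2 : (#|[set i | (0 <= vw A w i)%R] :&: [set i | (vw A w i <= 0)%R]| <= 3)%N.
    by have := max_card (mem ([set i | 0 <= vw A w i] :&: [set i | vw A w i <= 0])); rewrite card_ord.
  lia.
apply: (@G0 A (fun c => - w c) hd).
- move=> c; case: (hw c) => [->|[->|->]]; rewrite ?oppr0; [left|right;right|right;left] => //; by rewrite opprK.
- by case: hnz => j hj; exists j; rewrite oppr_eq0.
- move=> c; rewrite oppr_eq0 => /hsup [_ [i [h1 h2]]]; exists i.
  rewrite vwN mulNr; split; clear -h1 h2; lra.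
- move=> c /hcol [i1 [i2 [ne [a1 a2]]]] _.
  have hN : (2 <= #|[set i | (A i c != 0)%R]|)%N by apply: (two_nz ne); rewrite inE.
  have [i [] ] := meet2 hT' hN; rewrite !inE => h1 h2; exists i.
  by rewrite vwN oppr_ge0.
Qed.

Lemma vw2 A (j k : 'I_n) (a b : R) i : j != k ->
  vw A (fun c => if c == j then a else if c == k then b else 0) i = A i j * a + A i k * b.
Proof.
move=> jk; have kj : (k == j) = false by rewrite eq_sym (negbTE jk).
rewrite /vw (bigD1 j) //= (bigD1 k) /=; last by rewrite kj.
rewrite eqxx kj eqxx big1 ?addr0 // => c /andP [cj ck].
by rewrite (negbTE cj) (negbTE ck) mulr0.
Qed.

Lemma vw3 A (c0 j k : 'I_n) (a b e : R) i : c0 != j -> c0 != k -> j != k ->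
  vw A (fun c => if c == c0 then a else if c == j then b else if c == k then e else 0) i
   = A i c0 * a + A i j * b + A i k * e.
Proof.
move=> h1 h2 h3.
have e1 : (j == c0) = false by rewrite eq_sym (negbTE h1).
have e2 : (k == c0) = false by rewrite eq_sym (negbTE h2).
have e3 : (k == j) = false by rewrite eq_sym (negbTE h3).
rewrite /vw (bigD1 c0) //= (bigD1 j) /=; last by rewrite e1.
rewrite (bigD1 k) /=; last by rewrite e2 e3.
rewrite eqxx e1 eqxx e2 e3 eqxx.
rewrite big1 ?addr0 ?addrA // => c /andP [/andP [cc0 cj] ck].
by rewrite (negbTE cc0) (negbTE cj) (negbTE ck) mulr0.
Qed.

Lemma mul_neg (a b : R) : a * b < 0 -> (a < 0 /\ 0 < b) \/ (0 < a /\ b < 0).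
Proof.
move=> h; case: (ltrgtP a 0) => ha.
- left; split => //; nra.
- right; split => //; nra.
- by move: h; rewrite ha mul0r ltxx.
Qed.

Definition HCOL A := forall c, nzcol A c -> exists i1 i2, i1 != i2 /\ A i1 c != 0 /\ A i2 c != 0.
Definition bad A := exists b, ~ graph_connected (solset d A b).

Lemma Pair A (j k : 'I_n) i1 i2 : (0 < d)%N -> HCOL A -> j != k ->
  A i1 j * A i2 j < 0 -> A i1 k * A i2 k < 0 -> bad A.
Proof.
wlog h1j : i1 i2 / A i1 j < 0.
  move=> H hd hcol jk p1 p2; case: (mul_neg p1) => [[a _]|[_ b]].
    exact: (H i1 i2).
  by apply: (H i2 i1) => //; rewrite mulrC.
move=> hd hcol jk p1 p2.
pose t : R := if 0 < A i1 k then 1 else -1.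
have h2j : 0 < A i2 j by nra.
have [f1 f2] : 0 < A i1 k * t /\ A i2 k * t < 0.
  rewrite /t; case: ifP => h.
    by rewrite !mulr1; split => //; nra.
  move/negbT: h; rewrite -leNgt => h; rewrite !mulrN1; split.
    rewrite oppr_gt0; case: (ltrgtP (A i1 k) 0) => // e; [by move: h; rewrite leNgt e|].
    by move: p2; rewrite e mul0r ltxx.
  have : A i1 k < 0.
    case: (ltrgtP (A i1 k) 0) => // e; [by move: h; rewrite leNgt e|].
    by move: p2; rewrite e mul0r ltxx.
  move=> h'; rewrite oppr_lt0; nra.
have kj : (k == j) = false by rewrite eq_sym (negbTE jk).
apply: (@G A (fun c => if c == j then 1 else if c == k then t else 0) hd) => //.
- move=> c; case: (c == j); first by right; left.
  case: (c == k); last by left.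
  by rewrite /t; case: ifP => _; right; [left|right].
- by exists j; rewrite eqxx oner_neq0.
- move=> c; case: (eqVneq c j) => [-> _|cj].
    split; [exists i1 | exists i2]; rewrite vw2 // !mul1r mulr1; split; lra.
  case: (eqVneq c k) => [-> _|ck]; last by rewrite eqxx.
  split; [exists i2 | exists i1]; rewrite vw2 // mulr1 (mulrC t); split; lra.
Qed.

Definition sgc (r : R) : R := if 0 < r then -1 else 1.
Lemma sgc_neg (r : R) : r != 0 -> r * sgc r < 0.
Proof.
rewrite /sgc => hx; case: ifP => h; first by rewrite mulrN1 oppr_lt0.
rewrite mulr1; case: (ltrgtP r 0) => // e; [by rewrite e in h| by rewrite e eqxx in hx].
Qed.
Lemma sgc_sq (r : R) : sgc r * sgc r = 1.
Proof. by rewrite /sgc; case: ifP => _; rewrite ?mulrNN mulr1. Qed.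
Lemma nz_of_neg (a b : R) : a * b < 0 -> a != 0 /\ b != 0.
Proof.
case/mul_neg => [[h1 h2]|[h1 h2]]; split.
- by rewrite (lt_eqF h1).
- by rewrite (gt_eqF h2).
- by rewrite (gt_eqF h1).
- by rewrite (lt_eqF h2).
Qed.

Lemma Cycle A (c0 j k : 'I_n) p q t : (0 < d)%N -> HCOL A ->
  c0 != j -> c0 != k -> j != k ->
  A p c0 * A q c0 < 0 -> A t c0 = 0 ->
  A p j * A t j < 0 -> A q j = 0 ->
  A q k * A t k < 0 -> A p k = 0 -> bad A.
Proof.
move=> hd hcol h1 h2 h3 f0 t0 g0 qj k0 pk.
pose sj := sgc (A p c0 * A p j).
pose sk := sgc (A q c0 * A q k).
have [nP nJ] := nz_of_neg f0.
have [nJp nJt] := nz_of_neg g0.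
have [nKq nKt] := nz_of_neg k0.
have f1 : A p c0 * (A p j * sj) < 0.
  by rewrite mulrA; apply: sgc_neg; rewrite mulf_neq0.
have f2 : A q c0 * (A q k * sk) < 0.
  by rewrite mulrA; apply: sgc_neg; rewrite mulf_neq0.
have f3 : (A p j * sj) * (A t j * sj) < 0.
  have -> : A p j * sj * (A t j * sj) = A p j * A t j * (sj * sj) by ring.
  by rewrite sgc_sq mulr1.
have f4 : (A q k * sk) * (A t k * sk) < 0.
  have -> : A q k * sk * (A t k * sk) = A q k * A t k * (sk * sk) by ring.
  by rewrite sgc_sq mulr1.
have e1 : (j == c0) = false by rewrite eq_sym (negbTE h1).
have e2 : (k == c0) = false by rewrite eq_sym (negbTE h2).
have e3 : (k == j) = false by rewrite eq_sym (negbTE h3).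
have sjv : sj = 1 \/ sj = -1 by rewrite /sj /sgc; case: ifP; [right|left].
have skv : sk = 1 \/ sk = -1 by rewrite /sk /sgc; case: ifP; [right|left].
move: f1 f2 f3 f4; set Jp := A p j * sj; set Jt := A t j * sj; set Kq := A q k * sk;
  set Kt := A t k * sk => f1 f2 f3 f4.
have signs : (A p c0 < 0 /\ 0 < A q c0 /\ 0 < Jp /\ Jt < 0 /\ Kq < 0 /\ 0 < Kt) \/
             (0 < A p c0 /\ A q c0 < 0 /\ Jp < 0 /\ 0 < Jt /\ 0 < Kq /\ Kt < 0).
  case: (mul_neg f0) => [[a b]|[a b]]; [left|right].
    have c1 : 0 < Jp by nra.
    have c2 : Kq < 0 by nra.
    have c3 : Jt < 0 by nra.
    have c4 : 0 < Kt by nra.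
    done.
  have c1 : Jp < 0 by nra.
  have c2 : 0 < Kq by nra.
  have c3 : 0 < Jt by nra.
  have c4 : Kt < 0 by nra.
  done.
apply: (@G A (fun c => if c == c0 then 1 else if c == j then sj else if c == k then sk else 0) hd) => //.
- move=> c; case: (c == c0); first by right; left.
  case: (c == j); first by case: sjv => ->; auto.
  case: (c == k); first by case: skv => ->; auto.
  by left.
- by exists c0; rewrite eqxx oner_neq0.
- move=> c; case: (eqVneq c c0) => [-> _|cc0].
    case: signs => [[a [b [e [f [g h]]]]]|[a [b [e [f [g h]]]]]].
      split; [exists p|exists q]; rewrite vw3 // ?pk ?qj !mul1r ?mul0r ?mulr1 ?addr0 -?/Jp -?/Kq; lra.
    split; [exists q|exists p]; rewrite vw3 // ?pk ?qj !mul1r ?mul0r ?mulr1 ?addr0 -?/Jp -?/Kq; lra.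
  case: (eqVneq c j) => [-> _|cj].
    rewrite /= -/Jp.
    case: signs => [[a [b [e [f [g h]]]]]|[a [b [e [f [g h]]]]]].
      split; [exists t|exists p]; rewrite vw3 // (mulrC sj) ?t0 ?pk ?mul0r ?mulr1 ?add0r ?addr0 -?/Jp -?/Jt -?/Kt; lra.
    split; [exists p|exists t]; rewrite vw3 // (mulrC sj) ?t0 ?pk ?mul0r ?mulr1 ?add0r ?addr0 -?/Jp -?/Jt -?/Kt; lra.
  case: (eqVneq c k) => [-> _|ck]; last by rewrite eqxx.
  rewrite /=.
  case: signs => [[a [b [e [f [g h]]]]]|[a [b [e [f [g h]]]]]].
    split; [exists q|exists t]; rewrite vw3 // (mulrC sk) ?t0 ?qj ?mul0r ?mulr1 ?add0r ?addr0 -?/Kq -?/Jt -?/Kt; lra.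
  split; [exists t|exists q]; rewrite vw3 // (mulrC sk) ?t0 ?qj ?mul0r ?mulr1 ?add0r ?addr0 -?/Kq -?/Jt -?/Kt; lra.
Qed.
End S.
Section S.
Variable R : realType.
Variables d n : nat.
Implicit Types (A : 'M[R]_(3, n)) (z x y : point d n).

Lemma third (p q : 'I_3) : p != q ->
  exists t, [/\ t != p, t != q & forall i, [|| i == p, i == q | i == t]].
Proof.
move=> pq.
have : #|~: [set p; q]| == 1%N.
  have h := cardsC [set p; q]; rewrite cards2 pq card_ord in h; apply/eqP; lia.
move/cards1P => [t ht].
have tin : t \in ~: [set p; q] by rewrite ht inE.
move: (tin); rewrite !inE negb_or => /andP [tp tq].
exists t; split => // i.
case: (boolP (i \in ~: [set p; q])); first by rewrite ht inE => ->; rewrite !orbT.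
by rewrite !inE negbK => /orP [] ->; rewrite ?orbT.
Qed.

Definition STUCK A := forall c, nzcol A c ->
  (exists i, 0 < A i c /\ exists j', j' != c /\ A i j' != 0) /\
  (exists i, A i c < 0 /\ exists j', j' != c /\ A i j' != 0).

Definition NOCOMP A := forall (j k : 'I_n) i1 i2, j != k ->
  A i1 j * A i2 j < 0 -> A i1 k * A i2 k < 0 -> False.

Lemma nzcolP A c i : A i c != 0 -> nzcol A c.
Proof. by move=> h; apply/existsP; exists i. Qed.

Lemma claim1 A : NOCOMP A -> STUCK A -> forall c, nzcol A c -> exists r, A r c = 0.
Proof.
move=> nocomp hst c nzc.
case: (boolP [exists r, A r c == 0]) => [/existsP [r /eqP] | /existsPn hall]; first by eauto.
exfalso.
have [[p [pp [j [jc pj]]]] [q [qn [k [kc qk]]]]] := hst c nzc.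
have pq : p != q by apply: contraTneq pp => ->; rewrite -leNgt ltW.
have [t [tp tq hi]] := third pq.
have := hall t; case: (ltrgtP (A t c) 0) => // htc _.
- have neg : forall i, i != p -> A i c < 0.
    move=> i ip; have := hi i; rewrite (negbTE ip) /= => /orP [] /eqP -> //.
  have [[ip [ipp _]] [im [imn _]]] := hst j (nzcolP pj).
  case: (ltrgtP (A p j) 0) => hpj; last by rewrite hpj eqxx in pj.
  + have ipnp : ip != p by apply: contraTneq ipp => ->; rewrite -leNgt ltW.
    apply: (nocomp c j p ip); [by rewrite eq_sym| |]; have := neg _ ipnp; nra.
  + have imnp : im != p by apply: contraTneq imn => ->; rewrite -leNgt ltW.
    apply: (nocomp c j p im); [by rewrite eq_sym| |]; have := neg _ imnp; nra.
- have pos : forall i, i != q -> 0 < A i c.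
    move=> i iq; have := hi i; rewrite (negbTE iq) /= => /orP [] /eqP -> //.
  have [[ip [ipp _]] [im [imn _]]] := hst k (nzcolP qk).
  case: (ltrgtP (A q k) 0) => hqk; last by rewrite hqk eqxx in qk.
  + have ipnq : ip != q by apply: contraTneq ipp => ->; rewrite -leNgt ltW.
    apply: (nocomp c k q ip); [by rewrite eq_sym| |]; have := pos _ ipnq; nra.
  + have imnq : im != q by apply: contraTneq imn => ->; rewrite -leNgt ltW.
    apply: (nocomp c k q im); [by rewrite eq_sym| |]; have := pos _ imnq; nra.
Qed.

Lemma opp2 (a b : 'I_3) (f : 'I_3 -> R) : a != b ->
  (forall i, f i != 0 -> i = a \/ i = b) ->
  (exists i, 0 < f i) -> (exists i, f i < 0) -> f a * f b < 0.
Proof.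
move=> ab cov [ip hp] [im hm].
case: (cov ip (negbT (gt_eqF hp))) => e1; case: (cov im (negbT (lt_eqF hm))) => e2;
  subst ip im; nra.
Qed.

Lemma KL A : (0 < d)%N -> STUCK A -> (exists c, nzcol A c) -> bad d A.
Proof.
move=> hd hst [c0 nz0].
have hcol : HCOL A.
  move=> c /hst [[i1 [h1 _]] [i2 [h2 _]]]; exists i1, i2; split; last by rewrite gt_eqF // lt_eqF.
  by apply: contraTneq h1 => ->; rewrite -leNgt ltW.
case: (boolP [exists j, exists k, exists i1, exists i2,
   (j != k) && (A i1 j * A i2 j < 0) && (A i1 k * A i2 k < 0)]).
  move/existsP => [j /existsP [k /existsP [i1 /existsP [i2 /andP [/andP [jk p1] p2]]]]].
  exact: (Pair hd hcol jk p1 p2).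
move/existsPn => hn.
have nocomp : NOCOMP A.
  move=> j k i1 i2 jk p1 p2.
  move: (hn j) => /existsPn/(_ k)/existsPn/(_ i1)/existsPn/(_ i2).
  by rewrite jk p1 p2.
have c1 := claim1 nocomp hst.
have [[p [pp [j [jc pj]]]] [q [qn [k [kc qk]]]]] := hst c0 nz0.
have pq : p != q by apply: contraTneq pp => ->; rewrite -leNgt ltW.
have [t [tp tq hi]] := third pq.
have cov : forall (r : 'I_3), r != p -> r != q -> r = t.
  by move=> r rp rq; have := hi r; rewrite (negbTE rp) (negbTE rq) /= => /eqP.
have pq0 : A p c0 * A q c0 < 0 by nra.
have t0 : A t c0 = 0.
  have [r hr] := c1 c0 nz0; rewrite -(cov r) //.
    by apply: contraTneq pp => <-; rewrite hr ltxx.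
  by apply: contraTneq qn => <-; rewrite hr ltxx.
have nzj := nzcolP pj.
have nzk := nzcolP qk.
have qj : A q j = 0.
  apply/eqP; apply: contraT => qjn.
  have [r hr] := c1 j nzj.
  have rt : r = t by apply: cov; [apply: contraTneq pj | apply: contraTneq qjn]; move=> <-; rewrite hr eqxx.
  have [[ip [hp _]] [im [hm _]]] := hst j nzj.
  have : A p j * A q j < 0.
    apply: (opp2 (f := fun i => A i j) pq); [|by exists ip|by exists im].
    move=> i /= hi0; case: (eqVneq i p) => [->|ip']; [by left|right].
    case: (eqVneq i q) => // iq; exfalso; move: hi0; rewrite (cov i ip' iq) -rt hr eqxx.
    done.
  move=> h; exfalso; apply: (nocomp c0 j p q _ pq0 h); by rewrite eq_sym.
have pk : A p k = 0.
  apply/eqP; apply: contraT => pkn.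
  have [r hr] := c1 k nzk.
  have rt : r = t by apply: cov; [apply: contraTneq pkn | apply: contraTneq qk]; move=> <-; rewrite hr eqxx.
  have [[ip [hp _]] [im [hm _]]] := hst k nzk.
  have : A p k * A q k < 0.
    apply: (opp2 (f := fun i => A i k) pq); [|by exists ip|by exists im].
    move=> i /= hi0; case: (eqVneq i p) => [->|ip']; [by left|right].
    case: (eqVneq i q) => // iq; exfalso; move: hi0; rewrite (cov i ip' iq) -rt hr eqxx.
    done.
  move=> h; exfalso; apply: (nocomp c0 k p q _ pq0 h); by rewrite eq_sym.
have pt : p != t by rewrite eq_sym.
have qt : q != t by rewrite eq_sym.
have pjt : A p j * A t j < 0.
  have [[ip [hp _]] [im [hm _]]] := hst j nzj.
  apply: (opp2 (f := fun i => A i j) pt); [|by exists ip|by exists im].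
  move=> i /= hi0; case: (eqVneq i p) => [->|ip']; [by left|right].
  case: (eqVneq i q) => [e|iq]; last exact: cov.
  by move: hi0; rewrite e qj eqxx.
have qkt : A q k * A t k < 0.
  have [[ip [hp _]] [im [hm _]]] := hst k nzk.
  apply: (opp2 (f := fun i => A i k) qt); [|by exists ip|by exists im].
  move=> i /= hi0; case: (eqVneq i q) => [->|iq]; [by left|right].
  case: (eqVneq i p) => [e|ip']; last exact: cov.
  by move: hi0; rewrite e pk eqxx.
have jk : j != k by apply: contraTneq qk => <-; rewrite qj eqxx.
apply: (Cycle hd hcol _ _ jk pq0 t0 pjt qj qkt pk); by rewrite eq_sym.
Qed.
End S.
Lemma cat_split (T : eqType) (a b c e : seq T) (x : T) : a ++ b = c ++ x :: e ->
  (exists m, c = a ++ m /\ b = m ++ x :: e) \/ (exists m, a = c ++ x :: m /\ e = m ++ b).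
Proof.
elim: a c => [|y a IH] c /=; first by move=> ->; left; exists c.
case: c => [|z c] /= [ey ea].
  by right; exists a; rewrite ey ea.
case: (IH c ea) => [[m [h1 h2]]|[m [h1 h2]]]; [left|right]; exists m.
  by rewrite ey h1 h2.
by rewrite ey h1 h2.
Qed.

Lemma rem_mid (T : eqType) (c : T) t1 t2 : c \notin t1 -> rem c (t1 ++ c :: t2) = t1 ++ t2.
Proof.
elim: t1 => /= [|y t IH]; first by rewrite eqxx.
by rewrite in_cons negb_or => /andP [h1 h2]; rewrite eq_sym (negbTE h1) IH.
Qed.

Section S.
Variable R : realType.
Variables d n : nat.
Implicit Types (A : 'M[R]_(3, n)) (z x y : point d n).

Definition zcol A c : 'M[R]_(3, n) := \matrix_(i, j) if j == c then 0 else A i j.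

Lemma can_elim_mono A (c : 'I_n) (J0 J : {set 'I_n}) (j : 'I_n) : can_elim (zcol A c) J0 j -> J \subset J0 -> j \in J ->
  c \notin J -> can_elim A J j.
Proof.
move=> [_ h] sub jJ cJ; split => //.
have jc : j != c by apply: contraNneq cJ => <-.
have e : forall i j', j' \in J -> zcol A c i j' = A i j'.
  by move=> i j' j'J; rewrite mxE; case: eqP => // ej; move: cJ; rewrite -ej j'J.
case: h => h; [left|right] => i hi j' j'J j'j; rewrite -e //;
  apply: (h i) => //; [by rewrite e | exact: (subsetP sub) | by rewrite e | exact: (subsetP sub)].
Qed.

Lemma eo_lift A c : can_elim A setT c -> has_EO (zcol A c) -> has_EO A.
Proof.
move=> hc [s0 [hp hs]].
have cs0 : c \in s0 by rewrite (perm_mem hp) mem_enum.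
have us0 : uniq s0 by rewrite (perm_uniq hp) enum_uniq.
have hp' : perm_eq (c :: rem c s0) (enum 'I_n) by apply: perm_trans _ hp; rewrite perm_sym perm_to_rem.
have us : uniq (c :: rem c s0) by rewrite (perm_uniq hp') enum_uniq.
exists (c :: rem c s0); split => // s1 s2 j.
case: s1 => [|c' s1'] /= [e1 e2].
  subst j; have -> : ~: [set x in [::]] = [set: 'I_n] :> {set 'I_n}.
    by apply/setP => x; rewrite !inE.
  exact: hc.
subst c'.
move: us; rewrite e2 => us.
have jn : j \notin c :: s1'.
  by move: us; rewrite -cat_cons cat_uniq => /and3P [_ /hasPn /(_ j) h _]; apply: h; rewrite inE eqxx.
move: hs e2 us0; case/splitPr: cs0 => t1 t2 hs e2 us0.
have ct1 : c \notin t1 by move: us0; rewrite cat_uniq => /and3P [_ /hasPn /(_ c) h _]; apply: h; rewrite inE eqxx.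
rewrite rem_mid // in e2.
have fin : forall u1 u2, t1 ++ c :: t2 = u1 ++ j :: u2 -> {subset u1 <= c :: s1'} ->
    can_elim A (~: [set x in c :: s1']) j.
  move=> u1 u2 eu su.
  have h0 := hs _ _ _ eu.
  apply: (can_elim_mono h0).
  - apply/subsetP => x; rewrite !inE; apply: contra => hx; exact: su.
  - by rewrite !inE; rewrite !inE in jn.
  - by rewrite !inE eqxx.
case: (cat_split e2) => [[m [h1 h2]]|[m [h1 h2]]].
  apply: (fin (t1 ++ c :: m) s2); first by rewrite h2 -catA.
  move=> x; rewrite mem_cat !inE h1 mem_cat => /orP [->|/orP [->|->]]; by rewrite ?orbT.
apply: (fin s1' (m ++ c :: t2)); first by rewrite h1 -catA.
by move=> x xs; rewrite inE xs orbT.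
Qed.

Lemma eo_zero A : (forall c, ~~ nzcol A c) -> has_EO A.
Proof.
move=> hz; exists (enum 'I_n); split => // s1 s2 j e.
have u : uniq (s1 ++ j :: s2) by rewrite -e enum_uniq.
split.
  rewrite !inE; move: u; rewrite cat_uniq => /and3P [_ /hasPn /(_ j) h _]; exact: (h (mem_head _ _)).
left => i hi; exfalso.
have := hz j; move/existsPn/(_ i); rewrite negbK => /eqP h; by rewrite h ltxx in hi.
Qed.

Definition upd (c : 'I_n) z (v : 'I_d.+1) : point d n := [ffun j => if j == c then v else z j].

Lemma sA_zcol A c z i : sA (zcol A c) z i = sA A z i - A i c * ((z c : nat)%:R).
Proof.
rewrite /sA (bigD1 c) //= [X in _ = X - _](bigD1 c) //= mxE eqxx mul0r add0r.
rewrite addrAC subrr add0r; apply: eq_bigr => j jc; by rewrite mxE (negbTE jc).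
Qed.

Lemma sA_upd A c z v i : sA A (upd c z v) i = sA (zcol A c) z i + A i c * ((v : nat)%:R).
Proof.
rewrite sA_zcol /sA (bigD1 c) //= [X in _ = X - _ + _](bigD1 c) //= !ffunE eqxx.
rewrite (eq_bigr (fun j => A i j * ((z j : nat)%:R))); last first.
  by move=> j jc; rewrite ffunE (negbTE jc).
lra.
Qed.

Lemma rowonly A c z i : (forall j, j != c -> A i j = 0) -> sA A z i = A i c * ((z c : nat)%:R).
Proof.
move=> h; rewrite /sA (bigD1 c) //= big1 ?addr0 // => j jc; by rewrite h // mul0r.
Qed.

Lemma upd_adj c z v : z != upd c z v -> adjacent z (upd c z v) /\ adjacent (upd c z v) z.
Proof.
move=> ne.
have zc : z c != v.
  apply: contraNneq ne => e; apply/eqP/ffunP => j; rewrite ffunE.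
  by case: eqP => // ->.
have e : forall (a b : point d n), (a = z /\ b = upd c z v) \/ (a = upd c z v /\ b = z) ->
    [set j | a j != b j] = [set c].
  move=> a b h; apply/setP => j; rewrite !inE.
  case: h => [[-> ->]|[-> ->]]; rewrite ffunE; case: (eqVneq j c) => [->|jc]; by rewrite ?eqxx // eq_sym.
by rewrite /adjacent !e ?cards1; auto.
Qed.

Lemma GT A c b0 b (v : 'I_d.+1) :
  (forall z, z \in solset d A b -> z \in solset d (zcol A c) b0) ->
  (forall z, z \in solset d (zcol A c) b0 -> upd c z v \in solset d A b) ->
  ~ graph_connected (solset d (zcol A c) b0) -> ~ graph_connected (solset d A b).
Proof.
move=> sub ins nc hc; apply: nc => x y hx hy.
set S0 := solset d (zcol A c) b0.
have c1 : connect (sol_rel S0) (upd c x v) (upd c y v).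
  apply: (connect_sub _ (hc _ _ (ins x hx) (ins y hy))) => a a' /and3P [ha ha' adj].
  by apply: connect1; rewrite /sol_rel !sub.
have cu : forall z, z \in S0 -> connect (sol_rel S0) z (upd c z v) /\ connect (sol_rel S0) (upd c z v) z.
  move=> z hz; case: (eqVneq z (upd c z v)) => [<-|ne]; first by rewrite connect0.
  have [a1 a2] := upd_adj ne.
  have hz' : upd c z v \in S0 by apply: sub; apply: ins.
  by split; apply: connect1; rewrite /sol_rel hz hz' ?a1 ?a2.
apply: connect_trans (proj1 (cu x hx)) _.
exact: connect_trans c1 (proj2 (cu y hy)).
Qed.

Lemma zc_le z (c : 'I_n) : ((z c : nat)%:R : R) <= d%:R.
Proof. by rewrite ler_nat -ltnS. Qed.
Lemma zc_ge z (c : 'I_n) : (0 : R) <= ((z c : nat)%:R : R).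
Proof. exact: ler0n. Qed.

Lemma transfer A c : can_elim A setT c -> bad d (zcol A c) -> bad d A.
Proof.
move=> [_ hc] [b0 nc].
have [S0e|[x0 hx0]] := set_0Vmem (solset d (zcol A c) b0).
  by exfalso; apply: nc => x y; rewrite S0e inE.
have b0le : forall i, (forall j, j != c -> A i j = 0) -> b0 i 0 <= 0.
  move=> i hi; move: hx0; rewrite in_solset => /forallP /(_ i).
  by rewrite sA_zcol (rowonly _ hi) subrr.
case: hc => hc.
- case: (boolP [exists r, 0 < A r c]) => [/existsP [r hr] | /existsPn hnr].
  + pose b : 'cV[R]_3 := \col_i (if 0 < A i c then A i c * d%:R else b0 i 0 + A i c * d%:R).
    exists b; apply: (@GT A c b0 b ord_max) nc.
    * move=> z; rewrite !in_solset => /forallP hz.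
      have hr' : forall j, j != c -> A r j = 0 := fun j jc => hc r hr j (in_setT j) jc.
      have zc : ((z c : nat)%:R : R) = d%:R.
        have := hz r; rewrite mxE hr (rowonly _ hr') ler_pM2l // => h.
        by apply/eqP; rewrite eq_le h zc_le.
      apply/forallP => i; rewrite sA_zcol zc.
      case: (boolP (0 < A i c)) => hi.
        have hi' : forall j, j != c -> A i j = 0 := fun j jc => hc i hi j (in_setT j) jc.
        by rewrite (rowonly _ hi') zc subrr; apply: b0le.
      have := hz i; rewrite mxE (negbTE hi); lra.
    * move=> z; rewrite !in_solset => /forallP hz; apply/forallP => i.
      rewrite mxE sA_upd /=.
      case: ifP => hi.
        have hi' : forall j, j != c -> A i j = 0 := fun j jc => hc i hi j (in_setT j) jc.
        by rewrite sA_zcol (rowonly _ hi') subrr add0r.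
      have := hz i; lra.
  + exists b0; apply: (@GT A c b0 b0 ord0) nc.
    * move=> z; rewrite !in_solset => /forallP hz; apply/forallP => i.
      rewrite sA_zcol; have := hz i; have := hnr i; rewrite -leNgt => h1.
      have := zc_ge z c; nra.
    * move=> z; rewrite !in_solset => /forallP hz; apply/forallP => i.
      by rewrite sA_upd /= mulr0 addr0.
- case: (boolP [exists r, A r c < 0]) => [/existsP [r hr] | /existsPn hnr].
  + pose b : 'cV[R]_3 := \col_i (if A i c < 0 then 0 else b0 i 0).
    exists b; apply: (@GT A c b0 b ord0) nc.
    * move=> z; rewrite !in_solset => /forallP hz.
      have hr' : forall j, j != c -> A r j = 0 := fun j jc => hc r hr j (in_setT j) jc.
      have zc : ((z c : nat)%:R : R) = 0.
        have := hz r; rewrite mxE hr (rowonly _ hr') => h.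
        have := zc_ge z c; move: h; set t := ((z c : nat)%:R : R) => h1 h2; nra.
      apply/forallP => i; rewrite sA_zcol zc mulr0 subr0.
      case: (boolP (A i c < 0)) => hi.
        have hi' : forall j, j != c -> A i j = 0 := fun j jc => hc i hi j (in_setT j) jc.
        by rewrite (rowonly _ hi') zc mulr0; apply: b0le.
      by have := hz i; rewrite mxE (negbTE hi).
    * move=> z; rewrite !in_solset => /forallP hz; apply/forallP => i.
      rewrite mxE sA_upd /= mulr0 addr0.
      case: ifP => hi; last exact: hz.
      have hi' : forall j, j != c -> A i j = 0 := fun j jc => hc i hi j (in_setT j) jc.
      by rewrite sA_zcol (rowonly _ hi') subrr.
  + pose b : 'cV[R]_3 := \col_i (b0 i 0 + A i c * d%:R).
    exists b; apply: (@GT A c b0 b ord_max) nc.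
    * move=> z; rewrite !in_solset => /forallP hz; apply/forallP => i.
      rewrite sA_zcol; have := hz i; rewrite mxE; have := hnr i; rewrite -leNgt => h1.
      have := zc_le z c; set t := ((z c : nat)%:R : R) => h2 h3; nra.
    * move=> z; rewrite !in_solset => /forallP hz; apply/forallP => i.
      rewrite mxE sA_upd /=; have := hz i; lra.
Qed.

Lemma nz_dec A c : nzcol A c -> (#|[set j | nzcol (zcol A c) j]| < #|[set j | nzcol A j]|)%N.
Proof.
move=> nzc; apply: proper_card; apply/properP; split.
  apply/subsetP => j; rewrite !inE => /existsP [i]; rewrite mxE.
  case: ifP => [_|_ h]; [by rewrite eqxx | by apply/existsP; exists i].
exists c; rewrite !inE //; apply/existsPn => i; by rewrite mxE eqxx negbK.
Qed.

Lemma notelim_stuck A c : ~ can_elim A setT c ->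
  (exists i, 0 < A i c /\ exists j', j' != c /\ A i j' != 0) /\
  (exists i, A i c < 0 /\ exists j', j' != c /\ A i j' != 0).
Proof.
move=> hn; split.
  case: (boolP [exists i, (0 < A i c) && [exists j', (j' != c) && (A i j' != 0)]]).
    by move/existsP => [i /andP [h1 /existsP [j' /andP [h2 h3]]]]; exists i; split => //; exists j'.
  move/existsPn => hall; exfalso; apply: hn; split; first exact: in_setT.
  left => i hi j' _ j'c; move: (hall i); rewrite hi /= => /existsPn /(_ j').
  by rewrite j'c /= negbK => /eqP.
case: (boolP [exists i, (A i c < 0) && [exists j', (j' != c) && (A i j' != 0)]]).
  by move/existsP => [i /andP [h1 /existsP [j' /andP [h2 h3]]]]; exists i; split => //; exists j'.
move/existsPn => hall; exfalso; apply: hn; split; first exact: in_setT.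
right => i hi j' _ j'c; move: (hall i); rewrite hi /= => /existsPn /(_ j').
by rewrite j'c /= negbK => /eqP.
Qed.

Lemma main_ind (hd : (0 < d)%N) m : forall A, (#|[set j | nzcol A j]| <= m)%N -> ~ has_EO A -> bad d A.
Proof.
elim: m => [|m IH] A hm hno.
  exfalso; apply: hno; apply: eo_zero => c; apply/negP => hc.
  have : c \in [set j | nzcol A j] by rewrite inE.
  move=> hin; have : (0 < #|[set j | nzcol A j]|)%N by apply/card_gt0P; exists c.
  move: hm; lia.
case: (classic (exists c, nzcol A c /\ can_elim A setT c)) => [[c [nzc hce]] | hne].
  apply: (transfer hce); apply: IH.
    by have := nz_dec nzc; lia.
  by move=> h; apply: hno; exact: eo_lift hce h.
case: (boolP [exists c, nzcol A c]) => [/existsP [c0 nz0] | /existsPn hz].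
  apply: (KL hd) => //; last by exists c0.
  move=> c nzc; apply: notelim_stuck => hce; apply: hne; by exists c.
by exfalso; apply: hno; exact: eo_zero hz.
Qed.
End S.

Unset Implicit Arguments.
Theorem lemma7 (R : realType) (d n : nat) (hd : (0 < d)%N) (A : 'M[R]_(3, n)) :
  ~ has_EO A -> exists b : 'cV[R]_3, ~ graph_connected (solset d A b).
Proof. move=> h; exact: (main_ind hd (leqnn _) h). Qed.
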